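(* Let $T$ be a topologically recurrent continuous linear operator on a real or complex Hausdorff topological vector space $X$ over $\mathbb{K}\in\{\mathbb{R},\mathbb{C}\}$, and let $\mathbb{T}=\{z\in\mathbb{C}:|z|=1\}$. Then: (a) for every $\lambda\in\mathbb{K}\setminus\mathbb{T}$ the operator $T-\lambda I$ has dense range; (b) if $X$ is real, then for every $\lambda\in\mathbb{C}\setminus\mathbb{T}$ the operator $\widetilde T-\lambda I$ has dense range in $\widetilde X$. Consequently, for every polynomial $p$ with coefficients in $\mathbb{K}$ having no roots in $\mathbb{T}$, the operator $p(T)$ has dense range in $X$.
   Context: $T$ is topologically recurrent if for every non-empty open $U\subset X$ there is $n\in\mathbb{N}$ with $T^n(U)\cap U\neq\varnothing$. For a real space $X$, its complexification is $\widetilde X=\{x+iy:x,y\in X\}$, topologically identified with $X\oplus X$, with complex scalar multiplication $(\alpha+i\beta)(x+iy)=(\alpha x-\beta y)+i(\alpha y+\beta x)$, and the complexified operator is $\widetilde T(x+iy)=Tx+iTy$. *)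

(* Defs.v *)
From HB Require Import structures.
From mathcomp Require Import all_boot all_order all_algebra.
From mathcomp Require Import all_classical all_reals all_analysis.
From mathcomp.real_closed Require Import complex.
Set Implicit Arguments. Unset Strict Implicit. Unset Printing Implicit Defensive.
Import Order.TTheory GRing.Theory Num.Theory.
Import numFieldTopology.Exports.
Local Open Scope classical_set_scope.
Local Open Scope ring_scope.

Definition topologically_recurrent (X : topologicalType) (T : X -> X) : Prop :=
  forall U : set X, open U -> U !=set0 ->
    exists n : nat, (0 < n)%N /\ ((iter n T) @` U) `&` U !=set0.

Definition dense_range (X Y : topologicalType) (f : X -> Y) : Prop :=
  closure (range f) = setT.

Definition shift_op (K : numDomainType) (X : lmodType K) (T : X -> X) (l : K)
  : X -> X := fun x => T x - l *: x.

Definition poly_op (K : numDomainType) (X : lmodType K) (p : {poly K})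
  (T : X -> X) : X -> X :=
  fun x => \sum_(i < size p) p`_i *: iter i T x.

(** Complexification of a real space X: ~X = X (+) X (x + iy ~ (x, y)),
    with the product topology; complex scalar multiplication
    (a + ib)(x + iy) = (ax - by) + i(ay + bx). *)
Definition cplx_scale (R : numDomainType) (X : lmodType R) (l : R[i]) (v : X * X)
  : X * X :=
  (complex.Re l *: v.1 - complex.Im l *: v.2, complex.Re l *: v.2 + complex.Im l *: v.1).

Definition cplx_op (X : Type) (T : X -> X) (v : X * X) : X * X :=
  (T v.1, T v.2).

Definition cplx_shift_op (R : numDomainType) (X : lmodType R) (T : X -> X)
  (l : R[i]) : X * X -> X * X :=
  fun v => cplx_op T v - cplx_scale l v.

(* Main.v *)
Require Import Defs.
From HB Require Import structures.
From mathcomp Require Import all_boot all_order all_algebra.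
From mathcomp Require Import all_classical all_reals all_analysis.
From mathcomp.real_closed Require Import complex.
From mathcomp Require Import ring lra.
Import Order.TTheory GRing.Theory Num.Theory.
Import numFieldTopology.Exports.
Local Open Scope classical_set_scope.
Local Open Scope ring_scope.



Section P.
Context {K : numDomainType} {X : lmodType K} (T : {linear X -> X}).

Lemma poly_opE (p : {poly K}) n x : (size p <= n)%N ->
  poly_op p T x = \sum_(i < n) p`_i *: iter i T x.
Proof.
move=> hn; rewrite /poly_op -(subnKC hn) big_split_ord /=.
rewrite [X in _ + X]big1 ?addr0 // => i _.
by rewrite nth_default ?scale0r // leq_addr.
Qed.

Lemma poly_opD p q x : poly_op (p + q) T x = poly_op p T x + poly_op q T x.
Proof.
rewrite (@poly_opE (p+q) (maxn (size p) (size q))) ?size_polyD //.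
rewrite (@poly_opE p (maxn (size p) (size q))) ?leq_maxl //.
rewrite (@poly_opE q (maxn (size p) (size q))) ?leq_maxr //.
by rewrite -big_split /=; apply: eq_bigr => i _; rewrite coefD scalerDl.
Qed.

Lemma poly_opZ c p x : poly_op (c *: p) T x = c *: poly_op p T x.
Proof.
rewrite (@poly_opE (c *: p) (size p)) ?size_scale_leq // /poly_op scaler_sumr.
by apply: eq_bigr => i _; rewrite coefZ scalerA.
Qed.

Lemma poly_opN p x : poly_op (- p) T x = - poly_op p T x.
Proof. by rewrite -(scaleN1r p) poly_opZ scaleN1r. Qed.

Lemma poly_opC c x : poly_op c%:P T x = c *: x.
Proof.
rewrite (@poly_opE _ 1) ?size_polyC ?leq_b1 // big_ord1 coefC /=; done.
Qed.

Lemma poly_op_lin p x y : poly_op p T (x + y) = poly_op p T x + poly_op p T y.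
Proof.
rewrite /poly_op -big_split; apply: eq_bigr => i _.
suff -> : iter i T (x + y) = iter i T x + iter i T y by rewrite scalerDr.
by elim: (nat_of_ord i) => //= n ->; rewrite linearD.
Qed.

Lemma iter_linZ n c x : iter n T (c *: x) = c *: iter n T x.
Proof. by elim: n => //= n ->; rewrite linearZ. Qed.

Lemma poly_op_linZ p c x : poly_op p T (c *: x) = c *: poly_op p T x.
Proof.
rewrite /poly_op scaler_sumr; apply: eq_bigr => i _.
by rewrite iter_linZ !scalerA mulrC.
Qed.

Lemma poly_op_linB p x y : poly_op p T (x - y) = poly_op p T x - poly_op p T y.
Proof. by rewrite poly_op_lin -scaleN1r poly_op_linZ scaleN1r. Qed.

Lemma poly_op0x p : poly_op p T 0 = 0.
Proof.
rewrite /poly_op big1 // => i _.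
suff -> : iter i T 0 = 0 by rewrite scaler0.
by elim: (nat_of_ord i) => //= n ->; rewrite linear0.
Qed.

Lemma poly_opT p x : T (poly_op p T x) = poly_op p T (T x).
Proof.
rewrite /poly_op linear_sum; apply: eq_bigr => i _.
rewrite linearZ /=; congr (_ *: _); by rewrite -iterS iterSr.
Qed.

Lemma poly_opMX p x : poly_op (p * 'X) T x = poly_op p T (T x).
Proof.
have [->|p0] := eqVneq p 0; first by rewrite mul0r /poly_op size_poly0 !big_ord0.
rewrite /poly_op size_mulX // big_ord_recl coefMX /= scale0r add0r.
by apply: eq_bigr => i _; rewrite coefMX /= -iterSr.
Qed.

Lemma poly_opM p q x : poly_op (p * q) T x = poly_op p T (poly_op q T x).
Proof.
elim/poly_ind: p q x => [|p c IH] q x.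
  by rewrite mul0r /poly_op size_poly0 !big_ord0.
rewrite mulrDl poly_opD -mulrA (mulrC 'X) IH poly_opMX poly_opD poly_opMX.
by rewrite -poly_opT mul_polyC poly_opZ poly_opC.
Qed.

Lemma poly_opXn n x : poly_op ('X^n) T x = iter n T x.
Proof.
elim: n x => [|n IH] x; first by rewrite expr0 -polyC1 poly_opC scale1r.
by rewrite exprSr poly_opMX IH iterSr.
Qed.

End P.
Section S.
Context {K : numFieldType} {X : topologicalLmodType K}.

Lemma add_small (N : set X) : nbhs 0 N -> exists2 N1 : set X, nbhs 0 N1 &
  forall a b, N1 a -> N1 b -> N (a + b).
Proof.
move=> hN.
have := @add_continuous X (0,0). rewrite /continuous_at /= addr0 => /(_ _ hN).
move=> [[A B] /= [nA nB] sub].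
exists (A `&` B); first exact: filterI.
by move=> a b [Aa _] [_ Bb]; exact: (sub (a, b)).
Qed.

Lemma scale_cont_k (k : K) : continuous (fun w : X => k *: w).
Proof.
move=> x N hN.
have := @scale_continuous K X (k,x). rewrite /continuous_at /= => /(_ _ hN).
move=> [[A B] /= [nA nB] sub].
apply: filterS nB => y By; exact: (sub (k, y)) (conj (nbhs_singleton nA) By).
Qed.

Lemma scale_small (N : set X) (C : K) : nbhs 0 N -> exists2 W : set X, nbhs 0 W &
  forall c w, `|c| <= C -> W w -> N (c *: w).
Proof.
move=> hN.
have := @scale_continuous K X (0,0). rewrite /continuous_at /= scaler0 => /(_ _ hN).
move=> [[A B] /= [nA nB] sub].
move: nA => /nbhs_ballP [e /= e0 hA].
pose k := (`|C| + 1) / e * 2.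
have k0 : 0 < k by rewrite /k !mulr_gt0 // ?invr_gt0 // ltr_wpDl.
exists ((fun w => k *: w) @^-1` B).
  have := scale_cont_k k 0; rewrite /continuous_at scaler0 => /(_ _ nB). done.
move=> c w hc hw.
have -> : c *: w = (c / k) *: (k *: w) by rewrite scalerA mulrVK // unitfE gt_eqF.
apply: (sub (c / k, k *: w)); split => //=.
apply: hA; rewrite /ball /= sub0r normrN normrM normfV (gtr0_norm k0).
rewrite ltr_pdivrMr //.
rewrite /k mulrA mulrCA divff ?gt_eqF // mulr1.
have C0 : 0 <= C := le_trans (normr_ge0 _) hc.
rewrite (ger0_norm C0); apply: (le_lt_trans hc).
rewrite mulrDl mul1r mulr_natr mulr2n -addrA; apply: ltr_pwDr; [exact: ltr_wpDl|exact: lexx].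
Qed.
End S.

Lemma transl (K : numFieldType) (X : topologicalLmodType K) (a y : X) (N : set X) :
  nbhs (y + a) N -> nbhs y [set z | N (z + a)].
Proof.
move=> hN.
have := @add_continuous X (y,a). rewrite /continuous_at /= => /(_ _ hN).
move=> [[A B] /= [nA nB] sub].
apply: filterS nA => z Az; exact: (sub (z, a)) (conj Az (nbhs_singleton nB)).
Qed.

Lemma ident (V : zmodType) (x Lx LPx LPwa R1wa Lwb : V) : x + (- R1wa + Lwb) = (x - (Lx - LPx)) + (LPwa - R1wa) - (LPx + LPwa - (Lx + Lwb)).
Proof.
rewrite !opprD !opprK !addrA.
rewrite (addrAC _ (- R1wa) (- LPx)).
rewrite (addrAC _ LPwa (- LPx)).
rewrite addrK.
rewrite (addrAC _ (- R1wa) (- LPwa)) addrK.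
rewrite (addrAC _ (- R1wa) Lx).
by rewrite subrK.
Qed.

Section Core.
Context {K : numFieldType} {X : topologicalLmodType K} (T : {linear X -> X}).
Hypothesis hT : continuous T.
Variable q : {poly K}.
Local Notation S := (poly_op q T).
Definition inS (z : X) := exists y, S y = z.

Lemma inS_add a b : inS a -> inS b -> inS (a + b).
Proof. by move=> [y <-] [y' <-]; exists (y + y'); rewrite poly_op_lin. Qed.

Lemma inS_opp a : inS a -> inS (- a).
Proof. by move=> [y <-]; exists (- y); rewrite -scaleN1r poly_op_linZ scaleN1r. Qed.

Lemma inS_sub a b : inS a -> inS b -> inS (a - b).
Proof. by move=> ha hb; apply: inS_add => //; exact: inS_opp. Qed.

Lemma inS_poly (P : {poly K}) a : inS a -> inS (poly_op P T a).
Proof.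
by move=> [y <-]; exists (poly_op P T y); rewrite -!poly_opM mulrC.
Qed.

Lemma inS_mul (P : {poly K}) z : inS (poly_op (P * q) T z).
Proof. by exists (poly_op P T z); rewrite -poly_opM mulrC. Qed.

Lemma poly_op2 (P : {poly K}) (w : X) : (size P <= 2)%N ->
  poly_op P T w = P`_0 *: w + P`_1 *: T w.
Proof. by move=> h; rewrite (poly_opE _ _ _ _ h) !big_ord_recl big_ord0 addr0. Qed.

Lemma comb_small (N0 : set X) (C : K) : nbhs 0 N0 -> exists2 W : set X, nbhs 0 W &
  forall (P1 P2 : {poly K}) (w w' : X), (size P1 <= 2)%N -> (size P2 <= 2)%N ->
   (forall i, `|P1`_i| <= C) -> (forall i, `|P2`_i| <= C) -> W w -> W w' ->
   N0 (poly_op P1 T w + poly_op P2 T w').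
Proof.
move=> h0.
have [N1 h1 s1] := add_small _ h0.
have [N2 h2 s2] := add_small _ h1.
have [W1 hW1 sW1] := scale_small _ C h2.
have hTW : nbhs 0 (T @^-1` W1).
  by have := hT 0; rewrite /continuous_at linear0 => /(_ _ hW1).
exists (W1 `&` T @^-1` W1); first exact: filterI.
move=> P1 P2 w w' s1' s2' c1 c2 [Ww TWw] [Ww' TWw'].
rewrite !poly_op2 //; apply: s1; apply: s2; apply: sW1 => //.
Qed.

Variables (F : numFieldType) (ev : {poly K} -> F) (emb : K -> F).
Hypothesis evM : forall P Q, ev (P * Q) = ev P * ev Q.
Hypothesis evB : forall P Q, ev (P - Q) = ev P - ev Q.
Hypothesis ev1 : ev 1 = 1.
Hypothesis evker : forall P, ev P = 0 -> exists P', P = P' * q.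
Hypothesis Hemb : forall y : F, exists c : K, `|y| <= emb c.
Hypothesis Hrep : exists Bnd : K, forall (nu : F) (c : K), `|nu| <= emb c ->
  exists L : {poly K}, [/\ (size L <= 2)%N, ev L = nu & forall i, `|L`_i| <= Bnd * c].

Lemma ev_eq_inS A B z : ev A = ev B -> inS (poly_op A T z - poly_op B T z).
Proof.
move=> e; have [P' hP] : exists P', A - B = P' * q by apply: evker; rewrite evB e subrr.
by rewrite -poly_opN -poly_opD hP; exact: inS_mul.
Qed.

Lemma evX n : ev ('X^n) = ev 'X ^+ n.
Proof. by elim: n => [|n IH]; rewrite ?expr0 ?ev1 // exprSr evM IH exprSr. Qed.




Lemma core_dense : `|ev 'X| != 1 -> topologically_recurrent T -> dense_range S.
Proof.
move=> lam_ne1 hrec.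
rewrite /dense_range; apply/seteqP; split => // x _ N hN.
apply: contrapT => hno.
have hN0 : nbhs 0 [set d | N (x + d)].
  have := @transl K X x 0 N; rewrite add0r => /(_ hN).
  by apply: filterS => d /=; rewrite addrC.
set lam := ev 'X in lam_ne1.
have [rho [rho1 hget]] : exists rho : F, `|rho| < 1 /\ forall n (u : X), (0 < n)%N ->
    exists (P : {poly K}) a b, [/\ ev P = rho ^+ n, inS (poly_op P T a - b) &
      ((a = u /\ b = iter n T u) \/ (a = iter n T u /\ b = u))].
  have : (`|lam| < 1) || (1 < `|lam|).
    by rewrite -real_neqr_lt ?realE ?normr_ge0 ?ler01.
  case/orP => [lt1|gt1].
    exists lam; split => // n u n0; exists ('X^n), u, (iter n T u); split.
    - exact: evX.
    - by rewrite poly_opXn subrr; exists 0; rewrite poly_op0x.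
    - by left.
  have lam0 : lam != 0 by rewrite -normr_gt0 (lt_trans ltr01).
  exists (lam^-1); split; first by rewrite normfV invf_lt1 // (lt_trans ltr01).
  move=> n u n0.
  have [c hc] := Hemb (lam^-1 ^+ n).
  have [Bnd hB] := Hrep.
  have [L [_ evL _]] := hB _ _ hc.
  exists L, (iter n T u), u; split => //; last by right.
  have := @ev_eq_inS (L * 'X^n) 1 u.
  rewrite poly_opM poly_opXn -polyC1 poly_opC scale1r; apply.
  by rewrite polyC1 evM evL evX ev1 -exprMn mulVf // expr1n.
pose delta := 1 - `|rho|.
have delta0 : 0 < delta by rewrite /delta subr_gt0.
have [cd hcd] := Hemb (delta^-1).
have [Bnd hB] := Hrep.
have [W hW sW] := comb_small _ (Bnd * cd) hN0.
have hV : nbhs x [set z | W (z - x)].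
  by have := @transl K X (- x) x W; rewrite subrr => /(_ hW).
have oU : open (interior [set z | W (z - x)]) by exact: open_interior.
have Ux : interior [set z | W (z - x)] x by exact: nbhs_singleton (nbhs_interior hV).
have [n [n0 [y [[u Uu uy] Uy]]]] := hrec _ oU (ex_intro _ x Ux).
have [P [a [b [evP inD hab]]]] := hget n u n0.
have Wa : W (a - x).
  by case: hab => [[-> _]|[-> _]]; [exact: interior_subset Uu | rewrite uy; exact: interior_subset Uy].
have Wb : W (b - x).
  by case: hab => [[_ ->]|[_ ->]]; [rewrite uy; exact: interior_subset Uy | exact: interior_subset Uu].
set mu := rho ^+ n in evP.
have rho0 : 0 <= `|rho| by [].
have mu1 : `|mu| <= `|rho|.
  rewrite /mu normrX -(prednK n0) exprS -[X in _ <= X]mulr1.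
  by rewrite ler_wpM2l // exprn_ile1 // ltW.
have hd : delta <= `|1 - mu|.
  apply: le_trans (lerB_dist 1 mu); rewrite normr1 /delta.
  by rewrite lerB.
have mu_ne1 : 1 - mu != 0 by rewrite -normr_gt0 (lt_le_trans delta0).
pose nu1 := (1 - mu)^-1.
pose nu2 := mu * nu1.
have hnu1 : `|nu1| <= emb cd.
  apply: le_trans hcd; rewrite /nu1 !normfV (gtr0_norm delta0).
  by rewrite lef_pV2 ?posrE // normr_gt0.
have hnu2 : `|nu2| <= emb cd.
  apply: le_trans hnu1; rewrite /nu2 normrM -[X in _ <= X]mul1r ler_wpM2r //.
  exact: (le_trans mu1 (ltW rho1)).
have [L [sL evL cL]] := hB _ _ hnu1.
have [R1 [sR cR]] := hB _ _ hnu2.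
move=> cR1.
set wa := a - x; set wb := b - x.
have ea : a = x + wa by rewrite /wa addrC subrK.
have eb : b = x + wb by rewrite /wb addrC subrK.
pose e := poly_op (- R1) T wa + poly_op L T wb.
have Ne : N (x + e).
  apply: (sW (- R1) L wa wb) => //; first by rewrite size_polyN.
  by move=> i; rewrite coefN normrN.
have inxe : inS (x + e).
  have K1 : inS (poly_op 1 T x - poly_op (L * (1 - P)) T x).
    by apply: ev_eq_inS; rewrite evM evB ev1 evP evL /nu1 mulVf.
  have K2 : inS (poly_op (L * P) T wa - poly_op R1 T wa).
    by apply: ev_eq_inS; rewrite evM evL evP cR /nu2 mulrC.
  have K3 : inS (poly_op L T (poly_op P T a - b)) := inS_poly L _ inD.
  have -> : x + e = (x - (poly_op L T x - poly_op L T (poly_op P T x))) +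
     (poly_op L T (poly_op P T wa) - poly_op R1 T wa) -
     (poly_op L T (poly_op P T x) + poly_op L T (poly_op P T wa) -
        (poly_op L T x + poly_op L T wb)).
    by rewrite /e poly_opN; apply: ident.
  apply: inS_sub; first apply: inS_add.
  - move: K1; rewrite -polyC1 poly_opC scale1r poly_opM polyC1 poly_opD poly_opN.
    by rewrite -polyC1 poly_opC scale1r poly_op_linB.
  - by move: K2; rewrite poly_opM.
  - by move: K3; rewrite ea eb poly_op_linB !poly_op_lin.
apply: hno; exists (x + e); split => //.
by case: inxe => z <-; exists z.
Qed.

End Core.


Lemma poly_opX {K : numDomainType} {X : lmodType K} (T : {linear X -> X}) x :
  poly_op 'X T x = T x.
Proof. by have := poly_opXn T 1 x; rewrite expr1. Qed.

Lemma shift_poly {K : numDomainType} {X : lmodType K} (T : {linear X -> X}) l :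
  shift_op T l = poly_op ('X - l%:P) T.
Proof.
by apply: funext => x; rewrite poly_opD poly_opN poly_opC poly_opX.
Qed.

Lemma scalar_dense {K : numFieldType} {X : topologicalLmodType K} (T : {linear X -> X})
  (l : K) : continuous T -> topologically_recurrent T -> `|l| != 1 ->
  dense_range (shift_op T l).
Proof.
move=> hT hrec hl; rewrite shift_poly.
apply: (@core_dense K X T hT ('X - l%:P) K (fun P => P.[l]) id) => //.
- by move=> P Q; rewrite hornerM.
- by move=> P Q; rewrite hornerD hornerN.
- by rewrite hornerC.
- by move=> P hP; apply/factor_theorem; rewrite /root hP.
- by move=> y; exists `|y|.
- exists 1 => nu c hc; exists nu%:P; split.
  + by rewrite size_polyC; case: (nu != 0).
  + by rewrite hornerC.
  + by move=> i; rewrite coefC mul1r; case: eqP => // _; rewrite normr0 (le_trans _ hc).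
- by rewrite hornerX.
Qed.

Section Q.
Variable R : realType.
Variables a b : R.
Definition qpoly : {poly R} := 'X^2 - (2 * a) *: 'X + (a ^+ 2 + b ^+ 2)%:P.
Definition evq (P : {poly R}) : R[i] := (map_poly (real_complex R) P).[a +i* b]%C.

Lemma evqM P Q : evq (P * Q) = evq P * evq Q.
Proof. by rewrite /evq rmorphM hornerM. Qed.
Lemma evqB P Q : evq (P - Q) = evq P - evq Q.
Proof. by rewrite /evq rmorphB hornerD hornerN. Qed.
Lemma evq1 : evq 1 = 1.
Proof. by rewrite /evq rmorph1 hornerC. Qed.
Lemma evqX : evq 'X = (a +i* b)%C.
Proof. by rewrite /evq map_polyX hornerX. Qed.
Lemma evq_lin (r0 r1 : R) : evq (r0%:P + r1%:P * 'X) = ((r0 + r1 * a) +i* (r1 * b))%C.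
Proof.
rewrite /evq rmorphD rmorphM /= !map_polyC /= map_polyX hornerD hornerM !hornerC hornerX.
by simpc.
Qed.
Lemma evq_q : evq qpoly = 0.
Proof.
rewrite /qpoly /evq raddfD raddfB /= map_polyXn map_polyZ map_polyC map_polyX /=.
rewrite !hornerE /=.
simpc. apply/eqP; rewrite eq_complex /=; apply/andP; split; apply/eqP; ring.
Qed.

Lemma lin_form (r : {poly R}) : (size r <= 2)%N -> r = (r`_0)%:P + (r`_1)%:P * 'X.
Proof.
move=> hr; apply/polyP => i.
rewrite coefD coefCM coefC coefX; case: i => [|[|i]] /=.
- by rewrite mulr0 addr0.
- by rewrite mulr1 add0r.
- by rewrite mulr0 addr0 nth_default // (leq_trans hr).
Qed.

Lemma size_lin (r0 r1 : R) : (size (r0%:P + r1%:P * 'X)%R <= 2)%N.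
Proof.
apply: (leq_trans (size_polyD _ _)); rewrite geq_max size_polyC.
rewrite (leq_trans (size_mul_leq _ _)) ?andbT; first by case: (r0 != 0).
by rewrite size_polyC size_polyX; case: (r1 != 0).
Qed.

Lemma coef_lin (r0 r1 : R) i : (r0%:P + r1%:P * 'X)`_i =
  if i == 0%N then r0 else if i == 1%N then r1 else 0.
Proof.
rewrite coefD coefCM coefC coefX; case: i => [|[|i]] /=.
- by rewrite mulr0 addr0.
- by rewrite mulr1 add0r.
- by rewrite mulr0 addr0.
Qed.

Lemma qpoly_neq0 : qpoly != 0.
Proof.
apply/eqP => /(congr1 (fun p : {poly R} => p`_2)).
rewrite /qpoly !coefE /= !(mulr0, addr0, subr0); exact/eqP/oner_neq0.
Qed.

Lemma size_qpoly : size qpoly = 3%N.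
Proof.
rewrite /qpoly -addrA size_polyDl size_polyXn //.
apply: (leq_ltn_trans (size_polyD _ _)); rewrite gtn_max size_polyC.
rewrite size_polyN (leq_ltn_trans (size_scale_leq _ _)) ?size_polyX //.
by case: (_ != 0).
Qed.

Hypothesis hb : b != 0.

Lemma evq_ker P : evq P = 0 -> exists P', P = P' * qpoly.
Proof.
move=> hP; exists (P %/ qpoly).
have e := divp_eq P qpoly.
set r := P %% qpoly in e.
have sr : (size r <= 2)%N by rewrite -ltnS -size_qpoly ltn_modp qpoly_neq0.
suff r0 : r = 0 by rewrite {1}e r0 addr0.
have er : evq r = 0.
  have : r = P - P %/ qpoly * qpoly by apply/eqP; rewrite eq_sym subr_eq addrC -e.
  by move=> ->; rewrite evqB evqM hP evq_q mulr0 subrr.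
move: er; rewrite (lin_form _ sr) evq_lin => /eqP; rewrite eq_complex /= => /andP [h0 h1].
move: h1; rewrite mulf_eq0 (negbTE hb) orbF => /eqP h1.
move: h0; rewrite h1 mul0r addr0 => /eqP h0.
by rewrite (_ : r`_0 = 0) // polyC0 mul0r addr0.
Qed.


Lemma evq_rep : exists Bnd : R, forall (nu : R[i]) (c : R), `|nu| <= c%:C%C ->
  exists L : {poly R}, [/\ (size L <= 2)%N, evq L = nu & forall i, `|L`_i| <= Bnd * c].
Proof.
exists (1 + (1 + `|a|) / `|b|) => -[c0 d0] c hc.
have hs : Num.sqrt (c0 ^+ 2 + d0 ^+ 2) <= c.
  by move: hc; simpc.
have hc0 : `|c0| <= c.
  apply: le_trans hs; rewrite -sqrtr_sqr ler_sqrt ?addr_ge0 ?sqr_ge0 //.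
  by rewrite lerDl sqr_ge0.
have hd0 : `|d0| <= c.
  apply: le_trans hs; rewrite -sqrtr_sqr ler_sqrt ?addr_ge0 ?sqr_ge0 //.
  by rewrite lerDr sqr_ge0.
have c0p : 0 <= c := le_trans (normr_ge0 _) hc0.
have tp : 0 <= `|b|^-1 by rewrite invr_ge0.
have ap : 0 <= `|a| by [].
exists ((c0 - d0 / b * a)%:P + (d0 / b)%:P * 'X); split.
- exact: size_lin.
- rewrite evq_lin subrK divfK //.
- move=> i; rewrite coef_lin.
  have hB : 0 <= 1 + (1 + `|a|) / `|b| by rewrite addr_ge0 // mulr_ge0 // addr_ge0.
  case: eqP => _.
    apply: (le_trans (ler_normB _ _)); rewrite !normrM normfV.
    have h0 : 0 <= c - `|d0| by rewrite subr_ge0.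
    have := mulr_ge0 h0 (mulr_ge0 tp ap).
    move=> h.
    nra.
  case: eqP => _; last by rewrite normr0 mulr_ge0.
  rewrite normrM normfV.
  have := ler_wpM2r tp hd0.
  have := mulr_ge0 c0p (mulr_ge0 ap tp). have := mulr_ge0 c0p tp.
  nra.
Qed.

End Q.
Arguments qpoly {R}.
Arguments evq {R}.

Lemma quad_dense (R : realType) (X : topologicalLmodType R) (T : {linear X -> X})
  (a b : R) : continuous T -> topologically_recurrent T -> b != 0 ->
  `|(a +i* b)%C| != 1 -> dense_range (poly_op (qpoly a b) T).
Proof.
move=> hT hrec hb hl.
apply: (@core_dense R X T hT (qpoly a b) R[i] (evq a b) (real_complex R)) => //.
- exact: evqM.
- exact: evqB.
- exact: evq1.
- exact: evq_ker.
- by move=> y; exists (Normc.normc y); rewrite lecE /= eqxx lexx.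
- exact: evq_rep.
- by rewrite evqX.
Qed.

Section Dense.
Context {K : numFieldType} {X : topologicalLmodType K}.

Lemma dense_comp (f g : X -> X) : continuous f -> dense_range f -> dense_range g ->
  dense_range (f \o g).
Proof.
move=> cf df dg; rewrite /dense_range; apply/seteqP; split => // y _ B hB.
have hBi : nbhs y B° := nbhs_interior hB.
have : closure (range f) y by rewrite df.
move=> /(_ _ hBi) [_ [[z _ <-] fzB]].
have : closure (range g) z by rewrite dg.
move=> /(_ _ (cf z _ fzB)) [_ [[w _ <-] gw]].
by exists (f (g w)); split => //; exists w.
Qed.

Lemma cont_add (f g : X -> X) : continuous f -> continuous g ->
  continuous (fun x => f x + g x).
Proof.
move=> cf cg x N hN.
have := @add_continuous X (f x, g x). rewrite /continuous_at /= => /(_ _ hN).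
move=> [[A B] /= [nA nB] sub].
have h : nbhs x (f @^-1` A `&` g @^-1` B) by apply: filterI; [exact: cf|exact: cg].
by apply: filterS h => z [Az Bz]; exact: (sub (f z, g z)).
Qed.

Lemma poly_op_cont (T : {linear X -> X}) (P : {poly K}) : continuous T ->
  continuous (poly_op P T).
Proof.
move=> hT; elim/poly_ind: P => [|P c IH].
  have -> : poly_op 0 T = fun _ => 0.
    by apply: funext => x; rewrite /poly_op size_poly0 big_ord0.
  exact: cst_continuous.
have -> : poly_op (P * 'X + c%:P) T = fun x => poly_op P T (T x) + c *: x.
  by apply: funext => x; rewrite poly_opD poly_opMX poly_opC.
apply: cont_add; last exact: scale_cont_k.
by move=> x; apply: continuous_comp; [exact: hT|exact: IH].
Qed.

Lemma dense_id : dense_range (@id X).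
Proof.
rewrite /dense_range; apply/seteqP; split => // y _ B hB.
by exists y; split; [exists y|exact: nbhs_singleton].
Qed.

Lemma dense_prod (T : {linear X -> X}) (I : eqType) (s : seq I) (f : I -> {poly K}) :
  continuous T -> (forall z, z \in s -> dense_range (poly_op (f z) T)) ->
  dense_range (poly_op (\prod_(z <- s) f z) T).
Proof.
move=> hT; elim: s => [|z s IH] hs.
  rewrite big_nil (_ : poly_op 1 T = id); first exact: dense_id.
  by apply: funext => x; have := poly_opC T 1 x; rewrite polyC1 scale1r.
rewrite big_cons (_ : poly_op _ T = poly_op (f z) T \o poly_op (\prod_(j <- s) f j) T).
  apply: dense_comp; first exact: poly_op_cont.
    by apply: hs; rewrite inE eqxx.
  by apply: IH => j hj; apply: hs; rewrite inE hj orbT.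
by apply: funext => x; rewrite /= poly_opM.
Qed.

Lemma dense_scale (T : {linear X -> X}) (c : K) (P : {poly K}) : c != 0 ->
  dense_range (poly_op P T) -> dense_range (poly_op (c *: P) T).
Proof.
move=> c0 dP.
rewrite (_ : poly_op _ T = (fun x => c *: x) \o poly_op P T).
  apply: dense_comp => //; first exact: scale_cont_k.
  rewrite /dense_range; apply/seteqP; split => // y _ B hB.
  exists y; split; last exact: nbhs_singleton.
  by exists (c^-1 *: y) => //; rewrite scalerA divff // scale1r.
by apply: funext => x; rewrite /= poly_opZ.
Qed.

End Dense.

Section Cplx.
Context {R : realType} {X : topologicalLmodType R} (T : {linear X -> X}).

Lemma cplx_shiftE a b (v : X * X) : cplx_shift_op T (a +i* b)%C v =
  (poly_op ('X - a%:P) T v.1 + b *: v.2, poly_op ('X - a%:P) T v.2 - b *: v.1).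
Proof.
rewrite -shift_poly /cplx_shift_op /cplx_op /cplx_scale /shift_op /=.
have -> : forall (p q : X * X), p - q = (p.1 - q.1, p.2 - q.2) by move=> [? ?] [? ?].
by congr (_, _); rewrite /= ?opprD ?opprB ?addrA ?opprK.
Qed.

Lemma qpoly_sq (a b : R) : qpoly a b = ('X - a%:P) * ('X - a%:P) + (b ^+ 2)%:P.
Proof.
rewrite /qpoly -mul_polyC !(rmorphD, rmorphM, rmorphXn) /=.
ring.
Qed.

Lemma qpolyE (a b : R) x : poly_op (qpoly a b) T x =
  poly_op ('X - a%:P) T (poly_op ('X - a%:P) T x) + b ^+ 2 *: x.
Proof. by rewrite qpoly_sq poly_opD poly_opM poly_opC. Qed.

Lemma cplx_comp (a b : R) v :
  cplx_shift_op T (a +i* b)%C (cplx_shift_op T (a +i* (- b))%C v) =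
  (poly_op (qpoly a b) T v.1, poly_op (qpoly a b) T v.2).
Proof.
rewrite !cplx_shiftE /= !qpolyE.
set S := poly_op ('X - a%:P) T.
rewrite /S poly_op_lin poly_op_linB !poly_op_linZ -/S.
congr (_, _).
- rewrite !scaleNr !opprK scalerDr scalerA -expr2.
  by rewrite addrA subrK.
- rewrite !scaleNr !opprK scalerDr scalerN scalerA -expr2 opprD opprK.
  by rewrite addrA addrK.
Qed.

End Cplx.

Section Real.
Context {R : realType}.

Lemma map_qpoly (a b : R) : map_poly (real_complex R) (qpoly a b) =
  ('X - (a +i* b)%C%:P) * ('X - (a +i* (- b))%C%:P).
Proof.
rewrite /qpoly raddfD raddfB /= map_polyXn map_polyZ map_polyC map_polyX /=.
have e1 : ((2 * a)%:C)%C = (a +i* b)%C + (a +i* (- b))%C.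
  by simpc; apply/eqP; rewrite eq_complex /=; apply/andP; split; apply/eqP; ring.
have e2 : ((a ^+ 2 + b ^+ 2)%:C)%C = (a +i* b)%C * (a +i* (- b))%C.
  by simpc; apply/eqP; rewrite eq_complex /=; apply/andP; split; apply/eqP; ring.
rewrite e1 e2 -mul_polyC !rmorphD rmorphM /=.
ring.
Qed.

End Real.

Section RealX.
Context {R : realType} {X : topologicalLmodType R} (T : {linear X -> X}).
Hypotheses (hT : continuous T) (hrec : topologically_recurrent T).

Lemma normc_real (a : R) : `|(a +i* 0)%C| = (`|a|)%:C%C.
Proof. by simpc; rewrite expr0n addr0 sqrtr_sqr. Qed.

Lemma qdense_all (l : R[i]) : `|l| != 1 ->
  dense_range (poly_op (qpoly (complex.Re l) (complex.Im l)) T).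
Proof.
case: l => a b /= hl.
have [b0|b0] := eqVneq b 0; last exact: quad_dense.
subst b.
have ha : `|a| != 1.
  by apply: contra hl => /eqP ha; rewrite normc_real ha.
rewrite (_ : poly_op _ T = poly_op ('X - a%:P) T \o poly_op ('X - a%:P) T).
  apply: dense_comp; first exact: poly_op_cont.
    by rewrite -shift_poly; exact: scalar_dense.
  by rewrite -shift_poly; exact: scalar_dense.
apply: funext => x; rewrite /= qpolyE expr0n scale0r addr0 //.
Qed.

Lemma real_b (l : R[i]) : `|l| != 1 -> dense_range (cplx_shift_op T l).
Proof.
move=> hl; have dQ := qdense_all _ hl.
move: hl dQ; case: l => a b /= _ dQ.
set Q := poly_op (qpoly a b) T in dQ.
apply/seteqP; split => // y _.
apply: (@closureS _ (range (fun v : X * X => (Q v.1, Q v.2)))).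
  move=> _ [v _ <-]; exists (cplx_shift_op T (a +i* (- b))%C v) => //.
  by rewrite cplx_comp.
case: y => y1 y2 B [[A1 A2] /= [h1 h2] sub].
have : closure (range Q) y1 by rewrite dQ.
move=> /(_ _ h1) [_ [[z1 _ <-] Az1]].
have : closure (range Q) y2 by rewrite dQ.
move=> /(_ _ h2) [_ [[z2 _ <-] Az2]].
exists (Q z1, Q z2); split; last exact: (sub (Q z1, Q z2)).
by exists (z1, z2).
Qed.

End RealX.

Section Conseq.


Lemma dense_sq {K : numFieldType} {X : topologicalLmodType K} (T : {linear X -> X})
  (p : {poly K}) : dense_range (poly_op (p * p) T) -> dense_range (poly_op p T).
Proof.
move=> d; apply/seteqP; split => // y _.
have : closure (range (poly_op (p * p) T)) y by rewrite d.
apply: closureS => _ [v _ <-]; exists (poly_op p T v) => //.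
by rewrite poly_opM.
Qed.

Lemma cplx_poly {R : realType} {X : topologicalLmodType R[i]} (T : {linear X -> X})
  (p : {poly R[i]}) : continuous T -> topologically_recurrent T ->
  (forall z : R[i], `|z| = 1 -> ~~ root p z) -> dense_range (poly_op p T).
Proof.
move=> hT hrec hp.
have p0 : p != 0.
  by apply/eqP => p0; move: (hp 1 (normr1 _)); rewrite p0 root0.
have [r er] := closed_field_poly_normal p.
rewrite er; apply: dense_scale; first by rewrite lead_coef_eq0.
apply: dense_prod => // z zr; rewrite -shift_poly; apply: scalar_dense => //.
apply/eqP => hz; have := hp z hz; rewrite er rootZ ?lead_coef_eq0 //.
by rewrite root_prod_XsubC zr.
Qed.

End Conseq.

Lemma real_poly {R : realType} {X : topologicalLmodType R} (T : {linear X -> X})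
  (p : {poly R}) : continuous T -> topologically_recurrent T ->
  (forall z : R[i], `|z| = 1 -> ~~ root (map_poly (fun r : R => (r%:C)%C) p) z) ->
  dense_range (poly_op p T).
Proof.
move=> hT hrec hp.
set pC := map_poly _ p in hp.
have p0 : pC != 0.
  by apply/eqP => p0; move: (hp 1 (normr1 _)); rewrite p0 root0.
have [r er] := closed_field_poly_normal pC.
set P0 := \prod_(z <- r) ('X - z%:P) in er.
pose Qp := \prod_(z <- r) qpoly (complex.Re z) (complex.Im z).
have dQ : dense_range (poly_op Qp T).
  apply: dense_prod => // z zr; apply: qdense_all => //.
  apply/eqP => hz; have := hp z hz; rewrite er rootZ ?lead_coef_eq0 //.
  by rewrite root_prod_XsubC zr.
apply: dense_sq.
have lc0 : lead_coef p != 0.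
  by rewrite lead_coef_eq0; apply: contra p0 => /eqP p00; rewrite /pC p00 map_poly0.
suff -> : p * p = (lead_coef p ^+ 2) *: Qp by apply: dense_scale; rewrite ?expf_neq0.
set c := lead_coef pC in er.
have ec : c = (lead_coef p)%:C%C by rewrite /c /pC lead_coef_map.
have c0 : c != 0 by rewrite /c lead_coef_eq0.
have hconj : map_poly (@conjc R) P0 = P0.
  have e1 : map_poly (@conjc R) pC = pC.
    rewrite /pC -map_poly_comp; apply: eq_map_poly => x /=; exact: conjc_real.
  apply: (scalerI c0); move: e1; rewrite {1}er map_polyZ /= ec conjc_real -ec.
  by move=> ->.
have eQ : map_poly (real_complex R) Qp = P0 * P0.
  rewrite /Qp rmorph_prod /=.
  under eq_bigr => z _ do rewrite map_qpoly.
  rewrite big_split /=; congr (_ * _).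
    by apply: eq_bigr => -[a b].
  rewrite -[X in _ = X]hconj /P0 rmorph_prod /=; apply: eq_bigr => -[a b] _.
  by rewrite map_polyXsubC.
apply: (@map_poly_inj _ _ (real_complex R)).
rewrite rmorphM /= -/pC map_polyZ /= eQ rmorphXn /= -ec er.
by rewrite -scalerAl -scalerAr scalerA expr2.
Qed.

Theorem mainTheorem6 (R : realType) :
  (* K = R : real Hausdorff topological vector spaces *)
  (forall (X : topologicalLmodType R) (T : {linear X -> X}),
     hausdorff_space X -> continuous T -> topologically_recurrent T ->
     [/\ (* (a) *)
         (forall l : R, `|l| != 1 -> dense_range (shift_op T l)),
         (* (b) *)
         (forall l : R[i], `|l| != 1 -> dense_range (cplx_shift_op T l))
       & (* consequence *)
         (forall p : {poly R},
            (forall z : R[i], `|z| = 1 ->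
               ~~ root (map_poly (fun r : R => (r%:C)%C) p) z) ->
            dense_range (poly_op p T))]) /\
  (* K = C : complex Hausdorff topological vector spaces *)
  (forall (X : topologicalLmodType R[i]) (T : {linear X -> X}),
     hausdorff_space X -> continuous T -> topologically_recurrent T ->
     (forall l : R[i], `|l| != 1 -> dense_range (shift_op T l)) /\
     (forall p : {poly R[i]},
        (forall z : R[i], `|z| = 1 -> ~~ root p z) ->
        dense_range (poly_op p T))).
Proof.
split.
- move=> X T _ hT hrec; split.
  + by move=> l hl; exact: scalar_dense.
  + by move=> l hl; exact: real_b.
  + by move=> p hp; exact: real_poly.
- move=> X T _ hT hrec; split.
  + by move=> l hl; exact: scalar_dense.
  + by move=> p hp; exact: cplx_poly.
Qed.
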